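(* In the general setting of the context, for every $h\in\{0,1,\dots,L-1\}$, $$\mathbb{P}\Big(P_h>\frac{1+2\theta_h}{1-\theta_h}P^*\Big)\le\exp\Big(-\frac{\epsilon^2}{6\gamma}\Big).$$
   Context: General setting. Let $m,k,n$ be positive integers and $b\in\mathbb{R}^m_{++}$. Let $\mathcal G$ be the set of proper, concave, upper semicontinuous functions $f:\mathbb{R}^k\to[-\infty,\infty)$ with bounded superlevel sets such that $\mathrm{dom} f\subset\mathbb{R}^k_+$ and $f(0)=0$. Let $f_1,\dots,f_n\in\mathcal G$ and $A_1,\dots,A_n\in\mathbb{R}_+^{m\times k}$. Let $P^*=\sup\{\sum_{t=1}^n f_t(x_t): x_t\in\mathbb{R}^k,\ \sum_{t=1}^n A_tx_t\le b\}$ and assume $P^*>0$. Let $\gamma>0$ satisfy, for every $t\in[n]$: $(A_tx)_i/b_i\le\gamma$ for all $i\in[m]$ and all $x$ with $f_t(x)\ge0$, and $f_t(x)\le\gamma P^*$ for all $x\in\mathrm{dom} f_t$. Let $\epsilon\in(0,1)$ be such that $L=\log_2(1/\epsilon)$ and $n\epsilon$ are integers. Let $\sigma$ be a uniformly random permutation of $[n]$; probabilities are over $\sigma$. For $h\in\{0,\dots,L-1\}$ let $\theta_h=2^{-(h+1)/2}\epsilon^{1/2}$ and $$P_h=\sup\Big\{\tfrac{1}{2^h\epsilon(1-\theta_h)}\sum_{t=1}^{2^hn\epsilon}f_{\sigma(t)}(x_t)\ :\ x_t\in\mathbb{R}^k,\ \tfrac{1}{2^h\epsilon(1+\theta_h)}\sum_{t=1}^{2^hn\epsilon}A_{\sigma(t)}x_t\le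 b\Big\}.$$ *)

(* Defs.v *)
From Stdlib Require Import Reals Classical ClassicalEpsilon.
From mathcomp Require Import all_boot all_fingroup.
Set Implicit Arguments. Unset Strict Implicit. Unset Printing Implicit Defensive.

Open Scope R_scope.

Definition vec (k : nat) := 'I_k -> R.

Definition sumR (n : nat) (P : 'I_n -> bool) (F : 'I_n -> R) : R :=
  \big[Rplus/R0]_(i < n | P i) F i.

(* Extended values in [-oo, +oo): None stands for -oo, Some r for r. *)
Definition xR := option R.

Definition xge (v : xR) (a : R) : Prop :=
  match v with Some r => a <= r | None => False end.

Definition vcomb k (l : R) (x y : vec k) : vec k := fun j => l * x j + (1 - l) * y j.

Definition concave k (f : vec k -> xR) : Prop :=
  forall (x y : vec k) (l a c : R), 0 <= l <= 1 ->
    f x = Some a -> f y = Some c ->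
    exists d, f (vcomb l x y) = Some d /\ l * a + (1 - l) * c <= d.

Definition usc k (f : vec k -> xR) : Prop :=
  forall (alpha : R) (xs : nat -> vec k) (x : vec k),
    (forall p, xge (f (xs p)) alpha) ->
    (forall j, Un_cv (fun p => xs p j) (x j)) ->
    xge (f x) alpha.

Definition bounded_superlevel k (f : vec k -> xR) : Prop :=
  forall alpha : R, exists M : R, forall x : vec k,
    xge (f x) alpha -> forall j, Rabs (x j) <= M.

(* Proper: f never +oo (built into xR) and not identically -oo. *)
Definition proper k (f : vec k -> xR) : Prop := exists x, f x <> None.

Definition zerov k : vec k := fun _ => 0.

Definition inG k (f : vec k -> xR) : Prop :=
  proper f /\ concave f /\ usc f /\ bounded_superlevel f /\
  (forall x, f x <> None -> forall j, 0 <= x j) /\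
  f (fun _ => 0) = Some 0.

Definition mv m k (A : 'I_m -> 'I_k -> R) (x : vec k) (i : 'I_m) : R :=
  sumR (fun _ => true) (fun j => A i j * x j).

(* Set of objective values of the offline problem defining P^* (only feasible
   points with finite objective contribute; points with value -oo do not
   affect the supremum). *)
Definition offline_vals m k n (f : 'I_n -> vec k -> xR)
  (A : 'I_n -> 'I_m -> 'I_k -> R) (b : 'I_m -> R) (v : R) : Prop :=
  exists (x : 'I_n -> vec k) (vals : 'I_n -> R),
    (forall t, f t (x t) = Some (vals t)) /\
    (forall i, sumR (fun _ => true) (fun t => mv (A t) (x t) i) <= b i) /\
    v = sumR (fun _ => true) vals.

Definition theta (eps : R) (h : nat) : R :=
  Rpower 2 (- (INR h + 1) / 2) * sqrt eps.

(* Objective values of the sampled problem defining P_h, for the permutation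
   sigma, with M = 2^h n eps sampled periods (positions t = 0..M-1, i.e. the
   paper's t = 1..M). *)
Definition sample_vals m k n (f : 'I_n -> vec k -> xR)
  (A : 'I_n -> 'I_m -> 'I_k -> R) (b : 'I_m -> R)
  (eps : R) (h M : nat) (sigma : {perm 'I_n}) (v : R) : Prop :=
  exists (x : 'I_n -> vec k) (vals : 'I_n -> R),
    (forall t : 'I_n, (t < M)%N -> f (sigma t) (x t) = Some (vals t)) /\
    (forall i, / (2 ^ h * eps * (1 + theta eps h)) *
               sumR (fun t : 'I_n => (t < M)%N) (fun t => mv (A (sigma t)) (x t) i)
               <= b i) /\
    v = / (2 ^ h * eps * (1 - theta eps h)) *
        sumR (fun t : 'I_n => (t < M)%N) vals.

(* "sup S > c" (sup in the extended reals) unfolds to: some element of S exceeds c. *)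
Definition sup_gt (S : R -> Prop) (c : R) : Prop := exists s, S s /\ c < s.

Definition pb (P : Prop) : bool :=
  if excluded_middle_informative P then true else false.

Definition prob_perm (n : nat) (E : {perm 'I_n} -> Prop) : R :=
  INR #|[set s : {perm 'I_n} | pb (E s)]| / INR #|[set: {perm 'I_n}]|.

(* Main.v *)
Require Import Defs.
From Stdlib Require Import Reals Classical ClassicalEpsilon Lra FunctionalExtensionality PropExtensionality.
From mathcomp Require Import all_boot all_fingroup.
From HB Require Import structures.
Set Implicit Arguments. Unset Strict Implicit. Unset Printing Implicit Defensive.
Open Scope R_scope.

Lemma Rplus_assoc' : associative Rplus. Proof. by move=> *; rewrite Rplus_assoc. Qed.
Lemma Rmult_assoc' : associative Rmult. Proof. by move=> *; rewrite Rmult_assoc. Qed.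
HB.instance Definition _ := Monoid.isComLaw.Build R R0 Rplus Rplus_assoc' Rplus_comm Rplus_0_l.
HB.instance Definition _ := Monoid.isComLaw.Build R R1 Rmult Rmult_assoc' Rmult_comm Rmult_1_l.
HB.instance Definition _ := Monoid.isMulLaw.Build R R0 Rmult Rmult_0_l Rmult_0_r.
HB.instance Definition _ := Monoid.isAddLaw.Build R Rmult Rplus Rmult_plus_distr_r Rmult_plus_distr_l.

Lemma big_Rle (I : Type) (r : seq I) (P : pred I) (F G : I -> R) :
  (forall i, P i -> F i <= G i) ->
  \big[Rplus/R0]_(i <- r | P i) F i <= \big[Rplus/R0]_(i <- r | P i) G i.
Proof.
move=> H; elim/big_rec2: _ => [|i x y Pi Hxy]; first lra.
by have := H i Pi; lra.
Qed.

Lemma big_Rge0 (I : Type) (r : seq I) (P : pred I) (F : I -> R) :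
  (forall i, P i -> 0 <= F i) -> 0 <= \big[Rplus/R0]_(i <- r | P i) F i.
Proof.
move=> H; elim/big_rec: _ => [|i x Pi Hx]; first lra.
by have := H i Pi; lra.
Qed.

Lemma big_Rscale (I : Type) (r : seq I) (P : pred I) (F : I -> R) c :
  c * \big[Rplus/R0]_(i <- r | P i) F i = \big[Rplus/R0]_(i <- r | P i) (c * F i).
Proof. by rewrite big_distrr. Qed.

Lemma big_Rprod_ge0 (I : Type) (r : seq I) (P : pred I) (F : I -> R) :
  (forall i, P i -> 0 <= F i) -> 0 <= \big[Rmult/R1]_(i <- r | P i) F i.
Proof.
move=> H; elim/big_rec: _ => [|i x Pi Hx]; first lra.
by apply: Rmult_le_pos; auto.
Qed.

Lemma exp_sum (I : Type) (r : seq I) (P : pred I) (F : I -> R) :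
  exp (\big[Rplus/R0]_(i <- r | P i) F i) = \big[Rmult/R1]_(i <- r | P i) exp (F i).
Proof.
elim/big_rec2: _ => [|i x y Pi H]; first by rewrite exp_0.
by rewrite exp_plus H.
Qed.

Lemma big_Rsub (I : Type) (r : seq I) (P : pred I) (F G : I -> R) :
  \big[Rplus/R0]_(i <- r | P i) (F i - G i) =
  \big[Rplus/R0]_(i <- r | P i) F i - \big[Rplus/R0]_(i <- r | P i) G i.
Proof.
elim/big_rec3: _ => [|i x y z Pi ->]; lra.
Qed.
Definition bne (E : R -> Prop) := (exists x, E x) /\ bound E.

Definition supR (E : R -> Prop) : R :=
  match excluded_middle_informative (bne E) with
  | left H => proj1_sig (completeness E (proj2 H) (proj1 H))
  | right _ => 0 end.

Lemma supR_lub E : bne E -> is_lub E (supR E).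
Proof.
move=> H; rewrite /supR; case: excluded_middle_informative => [H'|//].
exact: proj2_sig (completeness E (proj2 H') (proj1 H')).
Qed.

Lemma supR_ub E x : bne E -> E x -> x <= supR E.
Proof. by move=> H Ex; case: (supR_lub H) => H1 _; apply: H1. Qed.

Lemma supR_le E C : bne E -> (forall x, E x -> x <= C) -> supR E <= C.
Proof. by move=> H HC; case: (supR_lub H) => _ H2; apply: H2. Qed.

Lemma bne_intro E x0 B : E x0 -> (forall x, E x -> x <= B) -> bne E.
Proof. by move=> H0 HB; split; [exists x0 | exists B]. Qed.

Lemma supR_approx E e : bne E -> 0 < e -> exists x, E x /\ supR E - e < x.
Proof.
move=> H He; apply: NNPP => Hn.
have : supR E <= supR E - e; last lra.
apply: supR_le => // x Ex.
apply: Rnot_lt_le => Hx; apply: Hn; by exists x.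
Qed.

Lemma lub_unique E a c : is_lub E a -> is_lub E c -> a = c.
Proof.
move=> [Ha1 Ha2] [Hc1 Hc2]; apply: Rle_antisym; [apply: Ha2 | apply: Hc2]; done.
Qed.

Lemma sup_comb2 E1 E2 l u C : bne E1 -> bne E2 -> 0 <= l -> 0 <= u ->
  (forall a c, E1 a -> E2 c -> l * a + u * c <= C) ->
  l * supR E1 + u * supR E2 <= C.
Proof.
move=> H1 H2 hl hu HC; apply: Rnot_lt_le => Hlt.
set d := l * supR E1 + u * supR E2 - C.
have dpos : 0 < d by rewrite /d; lra.
set e := d / (l + u + 1).
have epos : 0 < e by rewrite /e; apply: Rdiv_lt_0_compat; lra.
have ele : (l + u) * e < d.
  have : e * (l + u + 1) = d by rewrite /e; field; lra.
  nra.
have [a [Ea Ha]] := supR_approx H1 epos.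
have [c [Ec Hc]] := supR_approx H2 epos.
have := HC a c Ea Ec.
have : l * (supR E1 - e) <= l * a by apply: Rmult_le_compat_l; lra.
have : u * (supR E2 - e) <= u * c by apply: Rmult_le_compat_l; lra.
rewrite /d in ele. nra.
Qed.

Lemma big_const_R n c : \big[Rplus/R0]_(i < n) c = INR n * c.
Proof.
elim: n => [|n IH]; first by rewrite big_ord0 /=; lra.
rewrite big_ord_recr IH S_INR /=. lra.
Qed.

Lemma choiceR (I : Type) (P : I -> R -> Prop) :
  (forall i, exists x, P i x) -> exists g : I -> R, forall i, P i (g i).
Proof.
move=> H; exists (fun i => proj1_sig (constructive_indefinite_description _ (H i))).
move=> i; exact: proj2_sig (constructive_indefinite_description _ (H i)).
Qed.

Lemma sup_sum n (E : 'I_n -> R -> Prop) C :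
  (forall t, bne (E t)) ->
  (forall a : 'I_n -> R, (forall t, E t (a t)) -> \big[Rplus/R0]_(t < n) a t <= C) ->
  \big[Rplus/R0]_(t < n) supR (E t) <= C.
Proof.
move=> HE HC; apply: Rnot_lt_le => Hlt.
set d := \big[Rplus/R0]_(t < n) supR (E t) - C.
have dpos : 0 < d by rewrite /d; lra.
set e := d / (INR n + 1).
have n0 : 0 <= INR n by apply: pos_INR.
have epos : 0 < e by rewrite /e; apply: Rdiv_lt_0_compat; lra.
have ele : INR n * e < d.
  have : e * (INR n + 1) = d by rewrite /e; field; lra.
  nra.
have [a Ha] := @choiceR _ (fun t x => E t x /\ supR (E t) - e < x)
   (fun t => supR_approx (HE t) epos).
have := HC a (fun t => proj1 (Ha t)).
have : \big[Rplus/R0]_(t < n) supR (E t) - INR n * e <= \big[Rplus/R0]_(t < n) a t.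
  rewrite -big_const_R -big_Rsub.
  by apply: big_Rle => t _; have := proj2 (Ha t); lra.
rewrite /d in ele; lra.
Qed.
Definition upd m (w : 'I_m -> R) (j : 'I_m) (s : R) : 'I_m -> R :=
  fun i => if i == j then s else w i.
Definition inD m (b : 'I_m -> R) (w : 'I_m -> R) := forall i, - b i <= w i.
Definition mixv m (l : R) (w1 w2 : 'I_m -> R) : 'I_m -> R :=
  fun i => l * w1 i + (1 - l) * w2 i.
Definition concD m (b : 'I_m -> R) (V : ('I_m -> R) -> R) :=
  forall w1 w2 l, inD b w1 -> inD b w2 -> 0 <= l <= 1 ->
    l * V w1 + (1 - l) * V w2 <= V (mixv l w1 w2).
Definition monoD m (b : 'I_m -> R) (V : ('I_m -> R) -> R) :=
  forall w1 w2, inD b w1 -> (forall i, w1 i <= w2 i) -> V w1 <= V w2.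
Definition bndD m (b : 'I_m -> R) (V : ('I_m -> R) -> R) :=
  exists B, forall w, inD b w -> V w <= B.
Definition depS m (S : {set 'I_m}) (V : ('I_m -> R) -> R) :=
  forall w w', (forall i, i \in S -> w i = w' i) -> V w = V w'.
Definition dotp m (p w : 'I_m -> R) := \big[Rplus/R0]_(i < m) (p i * w i).

Lemma one_dim (g : R -> R) be : 0 < be ->
  (forall s1 s2 l, - be <= s1 -> - be <= s2 -> 0 <= l <= 1 ->
     l * g s1 + (1 - l) * g s2 <= g (l * s1 + (1 - l) * s2)) ->
  (forall s1 s2, - be <= s1 -> s1 <= s2 -> g s1 <= g s2) ->
  exists c, 0 <= c /\ forall s, - be <= s -> g s <= g 0 + c * s.
Proof.
move=> hbe Hc Hm.
have three : forall s u, - be <= s -> s < 0 -> 0 < u ->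
    (g u - g 0) / u <= (g 0 - g s) / (- s).
  move=> s u hs1 hs2 hu.
  set l := u / (u - s).
  have hl : 0 <= l <= 1.
    rewrite /l; split; first by apply: Rlt_le; apply: Rdiv_lt_0_compat; lra.
    have : l * (u - s) = u by rewrite /l; field; lra.
    rewrite /l => H; nra.
  have e0 : l * s + (1 - l) * u = 0 by rewrite /l; field; lra.
  have := Hc s u l hs1 ltac:(lra) hl; rewrite e0 => H.
  have hl1 : l * (u - s) = u by rewrite /l; field; lra.
  set X := (g u - g 0) / u. set Y := (g 0 - g s) / (- s).
  have hX : X * u = g u - g 0 by rewrite /X; field; lra.
  have hY : Y * (- s) = g 0 - g s by rewrite /Y; field; lra.
  have us : 0 < u * - s by nra.
  have : (- s) * (g u - g 0) <= u * (g 0 - g s).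
    have H3 := Rmult_le_compat_r (u - s) _ _ ltac:(lra) H.
    have E : (l * g s + (1 - l) * g u) * (u - s) = u * g s + (- s) * g u.
      have -> : (l * g s + (1 - l) * g u) * (u - s) =
        (l * (u - s)) * g s + (u - s) * g u - (l * (u - s)) * g u by ring.
      rewrite hl1; ring.
    rewrite E in H3; lra.
  rewrite -hX -hY => H2.
  nra.
set K := fun y => exists s, 0 < s /\ y = (g s - g 0) / s.
have bK : bne K.
  apply: (@bne_intro K ((g 1 - g 0) / 1) ((g 0 - g (- be)) / (- - be))).
    by exists 1; split => //; lra.
  move=> y [s [hs ->]]; apply: three => //; lra.
exists (supR K); split.
  apply: Rle_trans (supR_ub bK (ex_intro _ 1 (conj Rlt_0_1 erefl))).
  have := Hm 0 1 ltac:(lra) ltac:(lra); rewrite Rdiv_1_r; lra.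
move=> s hs.
case: (Rtotal_order s 0) => [sn|[->|sp]].
- have : supR K <= (g 0 - g s) / (- s).
    apply: supR_le => // y [u [hu ->]]; exact: three.
  set Y := (g 0 - g s) / (- s) => HY.
  have hY : Y * (- s) = g 0 - g s by rewrite /Y; field; lra.
  nra.
- rewrite Rmult_0_r; lra.
- have : (g s - g 0) / s <= supR K by apply: supR_ub => //; exists s.
  set X := (g s - g 0) / s => HX.
  have hX : X * s = g s - g 0 by rewrite /X; field; lra.
  nra.
Qed.
Lemma inD_upd m (b : 'I_m -> R) w j s : inD b w -> - b j <= s -> inD b (upd w j s).
Proof. by move=> Hw Hs i; rewrite /upd; case: eqP => [->|]. Qed.

Lemma inD0 m (b : 'I_m -> R) : (forall i, 0 < b i) -> inD b (fun _ => 0).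
Proof. by move=> hb i; have := hb i; lra. Qed.

Lemma inD_mix m (b : 'I_m -> R) w1 w2 l : inD b w1 -> inD b w2 -> 0 <= l <= 1 ->
  inD b (mixv l w1 w2).
Proof.
move=> H1 H2 hl i; rewrite /mixv; have := H1 i; have := H2 i => a c.
have : l * - b i <= l * w1 i by apply: Rmult_le_compat_l; lra.
have : (1 - l) * - b i <= (1 - l) * w2 i by apply: Rmult_le_compat_l; lra.
lra.
Qed.

Lemma upd_id m (w : 'I_m -> R) j : upd w j (w j) = w.
Proof. by apply: functional_extensionality => i; rewrite /upd; case: eqP => [->|]. Qed.

Lemma mix_upd m (w1 w2 : 'I_m -> R) j s1 s2 l :
  mixv l (upd w1 j s1) (upd w2 j s2) = upd (mixv l w1 w2) j (l * s1 + (1 - l) * s2).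
Proof. by apply: functional_extensionality => i; rewrite /upd /mixv; case: eqP. Qed.

Lemma mix_upd0 m j s1 s2 l :
  mixv l (upd (fun _ : 'I_m => 0) j s1) (upd (fun _ => 0) j s2) =
  upd (fun _ => 0) j (l * s1 + (1 - l) * s2).
Proof. by apply: functional_extensionality => i; rewrite /upd /mixv; case: eqP => _ //; ring. Qed.

Lemma dotp_upd m (p w : 'I_m -> R) j c :
  dotp (upd p j c) w = c * w j + dotp p (upd w j 0) - p j * 0.
Proof.
rewrite /dotp (bigD1 j) //= [in X in _ = _ + X - _](bigD1 j) //=.
rewrite /upd eqxx.
have -> : \big[Rplus/R0]_(i < m | i != j) ((if i == j then c else p i) * w i) =
          \big[Rplus/R0]_(i < m | i != j) (p i * (if i == j then 0 else w i)).
  by apply: eq_bigr => i /negPf ->.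
rewrite Rmult_0_r Rplus_0_l Rminus_0_r; reflexivity.
Qed.

Lemma supergrad_ind m (b : 'I_m -> R) (hb : forall i, 0 < b i) N :
  forall (S : {set 'I_m}), #|S| = N -> forall V, concD b V -> monoD b V -> bndD b V ->
  depS S V -> exists p, forall w, inD b w -> V w <= V (fun _ => 0) + dotp p w.
Proof.
elim: N => [|N IH] S hS V Vc Vm [B VB] Vd.
  exists (fun _ => 0) => w _.
  have -> : V w = V (fun _ => 0).
    apply: Vd => i; move/cards0_eq: hS => ->; by rewrite inE.
  rewrite /dotp big1 /=; first lra.
  by move=> i _; ring.
have [j jS] : exists j, j \in S.
  by apply/set0Pn; apply/eqP => S0; rewrite S0 cards0 in hS.
set S' := S :\ j.
have hS' : #|S'| = N by move: hS; rewrite (cardsD1 j S) jS add1n => -[].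
set g := fun s => V (upd (fun _ => 0) j s).
have [c [c0 Hc]] : exists c, 0 <= c /\ forall s, - b j <= s -> g s <= g 0 + c * s.
  apply: one_dim; first exact: hb.
  - move=> s1 s2 l h1 h2 hl; rewrite /g -mix_upd0; apply: Vc => //;
      apply: inD_upd => //; exact: inD0.
  - move=> s1 s2 h1 h2; rewrite /g; apply: Vm.
      by apply: inD_upd => //; exact: inD0.
    by move=> i; rewrite /upd; case: eqP => _; lra.
have g0 : g 0 = V (fun _ => 0).
  rewrite /g; congr V; apply: functional_extensionality => i; rewrite /upd; by case: eqP.
set E := fun w y => exists s, - b j <= s /\ y = V (upd w j s) - c * s.
set W := fun w => supR (E w).
have bE : forall w, inD b w -> bne (E w).
  move=> w hw; apply: (@bne_intro _ (V (upd w j 0) - c * 0) (B + c * b j)).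
    by exists 0; split => //; have := hb j; lra.
  move=> y [s [hs ->]]; have := VB _ (inD_upd hw hs).
  have : - (c * s) <= c * b j by nra.
  lra.
have WE : forall w s, inD b w -> - b j <= s -> V (upd w j s) - c * s <= W w.
  by move=> w s hw hs; apply: supR_ub; [exact: bE | exists s].
have [p' Hp'] : exists p, forall w, inD b w -> W w <= W (fun _ => 0) + dotp p w.
  apply: (IH S' hS') => //.
  - move=> w1 w2 l h1 h2 hl; rewrite /W.
    apply: sup_comb2; try apply: bE => //; try lra.
    move=> a1 a2 [s1 [hs1 ->]] [s2 [hs2 ->]].
    have hs3 : - b j <= l * s1 + (1 - l) * s2.
      have := hb j; nra.
    have := WE _ _ (inD_mix h1 h2 hl) hs3.
    rewrite -mix_upd.
    have := Vc _ _ l (inD_upd h1 hs1) (inD_upd h2 hs2) hl.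
    rewrite /W => H1 H2; lra.
  - move=> w1 w2 h1 h12; apply: supR_le; first exact: bE.
    move=> y [s [hs ->]].
    have h2 : inD b w2 by move=> i; have := h1 i; have := h12 i; lra.
    have := WE _ _ h2 hs.
    have : V (upd w1 j s) <= V (upd w2 j s).
      apply: Vm; first exact: inD_upd.
      by move=> i; rewrite /upd; case: eqP => _; [lra|].
    lra.
  - exists (B + c * b j) => w hw; apply: supR_le; first exact: bE.
    move=> y [s [hs ->]]; have := VB _ (inD_upd hw hs).
    have : - (c * s) <= c * b j by nra.
    lra.
  - move=> w w' Hww'; rewrite /W; congr supR.
    apply: functional_extensionality => y; apply: propositional_extensionality.
    have HV : forall s, V (upd w j s) = V (upd w' j s).
      move=> s; apply: Vd => i iS; rewrite /upd; case: eqP => // /eqP ij.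
      by apply: Hww'; rewrite /S' !inE ij.
    by split => -[s [hs ->]]; exists s; rewrite HV.
have W0 : W (fun _ => 0) <= V (fun _ => 0).
  apply: supR_le; first by apply: bE; exact: inD0.
  by move=> y [s [hs ->]]; have := Hc s hs; rewrite g0 /g; lra.
exists (upd p' j c) => w hw.
have Wdep : W w = W (upd w j 0).
  rewrite /W; congr supR.
  apply: functional_extensionality => y; apply: propositional_extensionality.
  have HV : forall s, upd w j s = upd (upd w j 0) j s.
    by move=> s; apply: functional_extensionality => i; rewrite /upd; case: eqP.
  by split => -[s [hs ->]]; exists s; rewrite -HV.
have hw0 : inD b (upd w j 0) by apply: inD_upd => //; have := hb j; lra.
have := WE w (w j) hw (hw j); rewrite upd_id Wdep => H1.
have := Hp' _ hw0.
rewrite dotp_upd; lra.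
Qed.

Lemma supergrad m (b : 'I_m -> R) (hb : forall i, 0 < b i) V :
  concD b V -> monoD b V -> bndD b V ->
  exists p, (forall i, 0 <= p i) /\ forall w, inD b w -> V w <= V (fun _ => 0) + dotp p w.
Proof.
move=> Vc Vm Vb.
have [p Hp] := supergrad_ind hb erefl Vc Vm Vb
   (fun w w' H => f_equal V (functional_extensionality _ _ (fun i => H i (in_setT i)))).
exists p; split => // i.
have h1 : inD b (upd (fun _ => 0) i 1).
  by apply: inD_upd; [exact: inD0 | have := hb i; lra].
have := Hp _ h1.
have : V (fun _ => 0) <= V (upd (fun _ => 0) i 1).
  apply: Vm; first exact: inD0.
  by move=> i'; rewrite /upd; case: eqP => _; lra.
have -> : dotp p (upd (fun _ => 0) i 1) = p i.
  rewrite /dotp (bigD1 i) //= big1 /=.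
    by rewrite /upd eqxx; ring.
  by move=> i' /negPf; rewrite /upd => ->; ring.
lra.
Qed.
Lemma choiceT (I T : Type) (P : I -> T -> Prop) :
  (forall i, exists x, P i x) -> exists g : I -> T, forall i, P i (g i).
Proof.
move=> H; exists (fun i => proj1_sig (constructive_indefinite_description _ (H i))).
move=> i; exact: proj2_sig (constructive_indefinite_description _ (H i)).
Qed.

Lemma mv0 m k (A : 'I_m -> 'I_k -> R) i : mv A (fun _ => 0) i = 0.
Proof. by rewrite /mv /sumR big1 // => j _; ring. Qed.

Lemma mv_comb m k (A : 'I_m -> 'I_k -> R) l x y i :
  mv A (vcomb l x y) i = l * mv A x i + (1 - l) * mv A y i.
Proof.
rewrite /mv /sumR !big_Rscale -big_split /=.
by apply: eq_bigr => j _; rewrite /vcomb; ring.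
Qed.

Lemma mv_ge0 m k (A : 'I_m -> 'I_k -> R) x i :
  (forall i j, 0 <= A i j) -> (forall j, 0 <= x j) -> 0 <= mv A x i.
Proof. move=> hA hx; apply: big_Rge0 => j _; apply: Rmult_le_pos; auto. Qed.

Lemma dotp_sum m n (p : 'I_m -> R) (F : 'I_n -> 'I_m -> R) :
  dotp p (fun i => \big[Rplus/R0]_(t < n) F t i) = \big[Rplus/R0]_(t < n) dotp p (F t).
Proof.
rewrite /dotp exchange_big /=; apply: eq_bigr => i _; by rewrite big_Rscale.
Qed.

Lemma dotp_sumP m n (p : 'I_m -> R) (P : pred 'I_n) (F : 'I_n -> 'I_m -> R) :
  dotp p (fun i => \big[Rplus/R0]_(t < n | P t) F t i) = \big[Rplus/R0]_(t < n | P t) dotp p (F t).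
Proof.
rewrite /dotp exchange_big /=; apply: eq_bigr => i _; by rewrite big_Rscale.
Qed.

Lemma dotp_sub m (p u v : 'I_m -> R) :
  dotp p (fun i => u i - v i) = dotp p u - dotp p v.
Proof.
rewrite /dotp -big_Rsub; apply: eq_bigr => i _; ring.
Qed.

Lemma dotp_scale m (p u : 'I_m -> R) c :
  dotp p (fun i => c * u i) = c * dotp p u.
Proof. rewrite /dotp big_Rscale; apply: eq_bigr => i _; ring. Qed.

Lemma dotp_le m (p u v : 'I_m -> R) : (forall i, 0 <= p i) -> (forall i, u i <= v i) ->
  dotp p u <= dotp p v.
Proof. move=> hp huv; apply: big_Rle => i _; apply: Rmult_le_compat_l; auto. Qed.

Lemma dotp_ge0 m (p u : 'I_m -> R) : (forall i, 0 <= p i) -> (forall i, 0 <= u i) ->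
  0 <= dotp p u.
Proof. move=> hp hu; apply: big_Rge0 => i _; apply: Rmult_le_pos; auto. Qed.

Definition Fe m k n (f : 'I_n -> vec k -> xR) (A : 'I_n -> 'I_m -> 'I_k -> R)
  (b : 'I_m -> R) (w : 'I_m -> R) (v : R) : Prop :=
  exists (x : 'I_n -> vec k) (vals : 'I_n -> R),
    (forall t, f t (x t) = Some (vals t)) /\
    (forall i, sumR (fun _ => true) (fun t => mv (A t) (x t) i) <= b i + w i) /\
    v = sumR (fun _ => true) vals.

Lemma dual m k n (b : 'I_m -> R) (hb : forall i, 0 < b i)
  (f : 'I_n -> vec k -> xR) (hf : forall t, inG (f t))
  (A : 'I_n -> 'I_m -> 'I_k -> R) (hA : forall t i j, 0 <= A t i j)
  (Pstar : R) (hPstar : is_lub (offline_vals f A b) Pstar) (Gm : R)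
  (hgf : forall t (x : vec k) r, f t x = Some r -> r <= Gm) :
  exists p, (forall i, 0 <= p i) /\
    forall (x : 'I_n -> vec k) (vals : 'I_n -> R), (forall t, f t (x t) = Some (vals t)) ->
      sumR (fun _ => true) vals <=
      Pstar + dotp p (fun i => sumR (fun _ => true) (fun t => mv (A t) (x t) i) - b i).
Proof.
have f0 : forall t, f t (fun _ => 0) = Some 0 by move=> t; case: (hf t) => _ [_ [_ [_ [_ ->]]]].
have fconc : forall t, concave (f t) by move=> t; case: (hf t) => _ [].
have fpos : forall t x, f t x <> None -> forall j, 0 <= x j.
  by move=> t; case: (hf t) => _ [_ [_ [_ [H _]]]].
have bFe : forall w, inD b w -> bne (Fe f A b w).
  move=> w hw; apply: (@bne_intro _ 0 (INR n * Gm)).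
    exists (fun _ => fun _ => 0), (fun _ => 0); split; first by move=> t; rewrite f0.
    split; last by rewrite /sumR big1.
    move=> i; rewrite /sumR big1; first by have := hw i; lra.
    by move=> t _; rewrite mv0.
  move=> v [x [vals [Hx [_ ->]]]]; rewrite -big_const_R.
  by apply: big_Rle => t _; exact: hgf _ _ _ (Hx t).
set V := fun w => supR (Fe f A b w).
have V0 : V (fun _ => 0) = Pstar.
  apply: lub_unique _ hPstar.
  have -> : offline_vals f A b = Fe f A b (fun _ => 0).
    apply: functional_extensionality => v; apply: propositional_extensionality.
    rewrite /offline_vals /Fe; split => -[x [vals [H1 [H2 H3]]]]; exists x, vals;
      (split; [done | split; [move=> i; have := H2 i; lra | done]]).
  by apply: supR_lub; apply: bFe; apply: inD0.
have [p [p0 Hp]] : exists p, (forall i, 0 <= p i) /\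
    forall w, inD b w -> V w <= V (fun _ => 0) + dotp p w.
  apply: supergrad => //.
  - move=> w1 w2 l h1 h2 hl; apply: sup_comb2; try apply: bFe; try lra; try done.
    move=> v1 v2 [x1 [vals1 [Hx1 [Hc1 ->]]]] [x2 [vals2 [Hx2 [Hc2 ->]]]].
    have [d Hd] := @choiceR _ (fun t d => f t (vcomb l (x1 t) (x2 t)) = Some d /\
        l * vals1 t + (1 - l) * vals2 t <= d)
      (fun t => fconc t _ _ _ _ _ hl (Hx1 t) (Hx2 t)).
    apply: Rle_trans (supR_ub (bFe _ (inD_mix h1 h2 hl)) _); last first.
      exists (fun t => vcomb l (x1 t) (x2 t)), d; split; first by move=> t; case: (Hd t).
      split; last reflexivity.
      move=> i; rewrite /sumR.
      have -> : \big[Rplus/R0]_(t < n | true) mv (A t) (vcomb l (x1 t) (x2 t)) i =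
          l * \big[Rplus/R0]_(t < n | true) mv (A t) (x1 t) i +
          (1 - l) * \big[Rplus/R0]_(t < n | true) mv (A t) (x2 t) i.
        rewrite !big_Rscale -big_split /=; apply: eq_bigr => t _; exact: mv_comb.
      have := Hc1 i; have := Hc2 i; rewrite /mixv /sumR => a c.
      have : l * \big[Rplus/R0]_(t < n | true) mv (A t) (x1 t) i <= l * (b i + w1 i).
        by apply: Rmult_le_compat_l; lra.
      have : (1 - l) * \big[Rplus/R0]_(t < n | true) mv (A t) (x2 t) i <= (1 - l) * (b i + w2 i).
        by apply: Rmult_le_compat_l; lra.
      lra.
    rewrite /sumR !big_Rscale -big_split /=.
    by apply: big_Rle => t _; case: (Hd t).
  - move=> w1 w2 h1 h12; apply: supR_le; first exact: bFe.
    have h2 : inD b w2 by move=> i; have := h1 i; have := h12 i; lra.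
    move=> v [x [vals [Hx [Hc ->]]]]; apply: supR_ub; first exact: bFe.
    exists x, vals; split => //; split => // i; have := Hc i; have := h12 i; lra.
  - exists (INR n * Gm) => w hw; apply: supR_le; first exact: bFe.
    move=> v [x [vals [Hx [_ ->]]]]; rewrite -big_const_R.
    by apply: big_Rle => t _; exact: hgf _ _ _ (Hx t).
exists p; split => // x vals Hx.
set w := fun i => sumR (fun _ => true) (fun t => mv (A t) (x t) i) - b i.
have hw : inD b w.
  move=> i; rewrite /w.
  have : 0 <= sumR (fun _ => true) (fun t => mv (A t) (x t) i).
    apply: big_Rge0 => t _; apply: mv_ge0 => //.
    by apply: (fpos t); rewrite Hx.
  lra.
rewrite -V0; apply: Rle_trans (Hp w hw).
apply: supR_ub; first exact: bFe.
by exists x, vals; split => //; split => // i; rewrite /w; lra.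
Qed.
Lemma event_S m k n (f : 'I_n -> vec k -> xR) (A : 'I_n -> 'I_m -> 'I_k -> R)
  (b : 'I_m -> R) (p : 'I_m -> R) (hp : forall i, 0 <= p i) (g : 'I_n -> R)
  (hg : forall t x r, f t x = Some r -> r - dotp p (fun i => mv (A t) x i) <= g t)
  (hg0 : forall t, 0 <= g t) (Pstar : R)
  (hG : \big[Rplus/R0]_(t < n) g t + dotp p b <= Pstar)
  eps h M (sigma : {perm 'I_n})
  (hth : 0 <= theta eps h < 1) (hal : 0 < 2 ^ h * eps) :
  sup_gt (sample_vals f A b eps h M sigma)
     ((1 + 2 * theta eps h) / (1 - theta eps h) * Pstar) ->
  2 ^ h * eps * \big[Rplus/R0]_(t < n) g t + 2 ^ h * eps * theta eps h * Pstar <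
  \big[Rplus/R0]_(t < n | (t < M)%N) g (sigma t).
Proof.
move=> [v [[x [vals [H1 [H2 ->]]]] Hv]].
set th := theta eps h in hth Hv H2 *.
set al := 2 ^ h * eps in hal Hv H2 *.
set G := \big[Rplus/R0]_(t < n) g t in hG *.
set S := \big[Rplus/R0]_(t < n | (t < M)%N) g (sigma t).
set SV := sumR (fun t : 'I_n => (t < M)%N) vals in Hv *.
set Mv := fun i => sumR (fun t : 'I_n => (t < M)%N) (fun t => mv (A (sigma t)) (x t) i).
have hSV : SV <= S + dotp p Mv.
  rewrite /Mv /sumR dotp_sumP /S -big_split /=.
  apply: big_Rle => t ht; have := hg _ _ _ (H1 t ht); lra.
have hMv : forall i, Mv i <= al * (1 + th) * b i.
  move=> i; have := H2 i; rewrite -/(Mv i) => H.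
  have pos : 0 < al * (1 + th) by nra.
  have -> : Mv i = al * (1 + th) * (/ (al * (1 + th)) * Mv i) by field; lra.
  by apply: Rmult_le_compat_l; lra.
have hD : dotp p Mv <= al * (1 + th) * dotp p b.
  rewrite -dotp_scale; exact: dotp_le.
have hv : al * (1 + 2 * th) * Pstar < SV.
  have pos : 0 < al * (1 - th) by nra.
  have e1 : al * (1 + 2 * th) * Pstar = al * (1 - th) * ((1 + 2 * th) / (1 - th) * Pstar)
    by field; lra.
  have e2 : SV = al * (1 - th) * (/ (al * (1 - th)) * SV) by field; lra.
  rewrite e1 e2; apply: Rmult_lt_compat_l => //.
have G0 : 0 <= G by apply: big_Rge0 => t _; auto.
have h3 : al * (1 + th) * dotp p b <= al * (1 + th) * (Pstar - G).
  apply: Rmult_le_compat_l; [nra | lra].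
have : 0 <= al * th * G by apply: Rmult_le_pos => //; nra.
nra.
Qed.
Definition PP n (z : 'I_n -> R) (j : nat) (s : {perm 'I_n}) : R :=
  \big[Rmult/R1]_(t < n | (t < j)%N) z (s t).

Definition FF n (z : 'I_n -> R) (j : nat) : R :=
  \big[Rplus/R0]_(s : {perm 'I_n}) PP z j s.

Lemma reindex_perm n (H : {perm 'I_n} -> R) (tau : {perm 'I_n}) :
  \big[Rplus/R0]_(s : {perm 'I_n}) H s = \big[Rplus/R0]_(s : {perm 'I_n}) H (mulg tau s).
Proof. exact: (reindex_inj (mulgI tau)). Qed.

Lemma PP_inv n (z : 'I_n -> R) j (s tau : {perm 'I_n}) :
  (forall t : 'I_n, (tau t < j)%N = (t < j)%N) ->
  PP z j (mulg tau s) = PP z j s.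
Proof.
move=> Ht; rewrite /PP (reindex_inj (@perm_inj _ tau^-1)) /=.
apply: eq_big => t.
  by rewrite -Ht permKV.
by move=> _; rewrite permM permKV.
Qed.

Lemma ge0_PP n (z : 'I_n -> R) j s : (forall t, 0 <= z t) -> 0 <= PP z j s.
Proof. move=> hz; apply: big_Rprod_ge0 => t _; auto. Qed.

Lemma sum_one (T : finType) : \big[Rplus/R0]_(s : T) 1 = INR #|T|.
Proof.
rewrite big_const; elim: #|T| => [|c IH] //.
rewrite iterS IH S_INR /=; lra.
Qed.

Lemma FF0 n (z : 'I_n -> R) : FF z 0 = INR #|{perm 'I_n}|.
Proof.
rewrite /FF -sum_one; apply: eq_bigr => s _; rewrite /PP big_pred0 //.
Qed.

Lemma FF_step n (z : 'I_n -> R) j (hz : forall t, 0 <= z t) (hj : (j < n)%N) :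
  INR n * FF z j.+1 <= (\big[Rplus/R0]_(t < n) z t) * FF z j.
Proof.
set jo : 'I_n := Ordinal hj.
have PPS : forall s, PP z j.+1 s = PP z j s * z (s jo).
  move=> s; rewrite /PP (bigD1 jo) /=; last by rewrite ltnSn.
  rewrite Rmult_comm; congr Rmult; apply: eq_bigl => t.
  rewrite ltnS; case: (ltngtP t j) => [tj|tj|tj] /=.
  - by apply/negP => /eqP te; move: tj; rewrite te /= ltnn.
  - by [].
  - by apply/negbF/eqP/val_inj.
set C := fun l : 'I_n => \big[Rplus/R0]_(s : {perm 'I_n}) (PP z j s * z (s l)).
have FFS : FF z j.+1 = C jo by rewrite /FF /C; apply: eq_bigr => s _; exact: PPS.
have L1 : forall l : 'I_n, (j <= l)%N -> C l = C jo.
  move=> l hl; rewrite /C (reindex_perm _ (tperm jo l)).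
  apply: eq_bigr => s _; rewrite PP_inv; last first.
    move=> t; case: (tpermP jo l t) => [->|->|//].
      by rewrite /= ltnn; apply/negbTE; rewrite -leqNgt.
    by rewrite /= ltnn; apply/esym/negbTE; rewrite -leqNgt.
  by rewrite permM tpermR.
have n0 : (0 < n)%N by exact: (leq_ltn_trans (leq0n j) hj).
set o0 : 'I_n := Ordinal n0.
have L2 : forall t0 : 'I_n, (t0 < j)%N -> C t0 = C o0.
  move=> t0 ht; rewrite /C (reindex_perm _ (tperm o0 t0)).
  apply: eq_bigr => s _; rewrite PP_inv; last first.
    move=> t; case: (tpermP o0 t0 t) => [->|->|//] /=.
      by rewrite ht; apply/esym; apply: leq_ltn_trans ht.
    by rewrite ht; apply: leq_ltn_trans ht.
  by rewrite permM tpermR.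
have L3 : (0 < j)%N -> C jo <= C o0.
  move=> j0.
  set Q := fun s : {perm 'I_n} => \big[Rmult/R1]_(t < n | ((t < j)%N && (t != o0))) z (s t).
  have PQ : forall s, PP z j s = z (s o0) * Q s.
    by move=> s; rewrite /PP (bigD1 o0).
  have Qinv : forall s, Q (mulg (tperm o0 jo) s) = Q s.
    move=> s; rewrite /Q (reindex_inj (@perm_inj _ (tperm o0 jo)^-1)) /=.
    apply: eq_big => t.
      rewrite tpermV; case: (tpermP o0 jo t) => [->|->|h1 h2] /=.
      - by rewrite ltnn andbF.
      - by rewrite ?eqxx ?andbF /= ?ltnn.
      - by [].
    by move=> _; rewrite !permM tpermV tpermK.
  have Qge0 : forall s, 0 <= Q s by move=> s; apply: big_Rprod_ge0 => t _; auto.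
  have E1 : \big[Rplus/R0]_(s : {perm 'I_n}) (Q s * (z (s jo) * z (s jo))) =
            \big[Rplus/R0]_(s : {perm 'I_n}) (Q s * (z (s o0) * z (s o0))).
    rewrite (reindex_perm _ (tperm o0 jo)); apply: eq_bigr => s _.
    by rewrite Qinv permM tpermR.
  have : 2 * C jo <= 2 * C o0.
    rewrite /C !big_Rscale.
    have -> : \big[Rplus/R0]_(s : {perm 'I_n}) (2 * (PP z j s * z (s o0))) =
      \big[Rplus/R0]_(s : {perm 'I_n}) (Q s * (z (s o0) * z (s o0))) +
      \big[Rplus/R0]_(s : {perm 'I_n}) (Q s * (z (s jo) * z (s jo))).
      rewrite E1 -big_split /=; apply: eq_bigr => s _; rewrite PQ; ring.
    rewrite -big_split /=; apply: big_Rle => s _; rewrite PQ.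
    have := Qge0 s; have := Rle_0_sqr (z (s o0) - z (s jo)); rewrite /Rsqr => h1 h2.
    nra.
  lra.
have Zperm : forall s : {perm 'I_n}, \big[Rplus/R0]_(l < n) z (s l) = \big[Rplus/R0]_(t < n) z t.
  by move=> s; rewrite [RHS](reindex_inj (@perm_inj _ s)).
have -> : (\big[Rplus/R0]_(t < n) z t) * FF z j =
    \big[Rplus/R0]_(l < n) C l.
  symmetry; rewrite /C exchange_big /FF Rmult_comm big_distrl /=.
  by apply: eq_bigr => s _; rewrite -big_distrr /= Zperm.
rewrite FFS -big_const_R; apply: big_Rle => l _.
case: (ltnP l j) => hl.
  rewrite (L2 _ hl); apply: L3; exact: leq_ltn_trans hl.
by rewrite (L1 _ hl); lra.
Qed.

Lemma FF_bound n (z : 'I_n -> R) (hz : forall t, 0 <= z t) (n0 : (0 < n)%N) M :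
  (M <= n)%N ->
  FF z M <= ((\big[Rplus/R0]_(t < n) z t) / INR n) ^ M * INR #|{perm 'I_n}|.
Proof.
have nR : 0 < INR n by apply: lt_0_INR; apply/ltP.
have Zs0 : 0 <= \big[Rplus/R0]_(t < n) z t by apply: big_Rge0 => t _; auto.
set Zs := \big[Rplus/R0]_(t < n) z t in Zs0 *.
elim: M => [|M IH] hM; first by rewrite FF0 /=; lra.
have hM' : (M < n)%N by [].
have := FF_step hz hM'; rewrite -/Zs => H.
have := IH (ltnW hM') => H2.
have : Zs * FF z M <= Zs * ((Zs / INR n) ^ M * INR #|{perm 'I_n}|) by apply: Rmult_le_compat_l.
rewrite /= => H3.
have e : Zs / INR n * ((Zs / INR n) ^ M * INR #|{perm 'I_n}|) * INR n =
         Zs * ((Zs / INR n) ^ M * INR #|{perm 'I_n}|) by field; lra.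
apply: (Rmult_le_reg_l (INR n)) => //; lra.
Qed.
Lemma nonneg_from_deriv (F F' : R -> R) a :
  (forall x, 0 <= x -> x <= a -> derivable_pt_lim F x (F' x)) ->
  (forall x, 0 <= x -> x <= a -> 0 <= F' x) -> 0 <= F 0 ->
  forall x, 0 <= x -> x <= a -> 0 <= F x.
Proof.
move=> Hd Hp H0 x hx hxa.
case: (Rle_lt_or_eq_dec 0 x hx) => [xp|<-] //.
have [c [hc1 [hc2 ->]]] := @MVT_cor3 F F' 0 x xp (fun y h1 h2 => Hd y h1 ltac:(lra)).
have := Hp c hc1 ltac:(lra); nra.
Qed.

Lemma exp_half_le2 x : x <= 1/2 -> exp x <= 2.
Proof.
move=> hx.
have e1 : exp (1/2) * exp (1/2) = exp 1 by rewrite -exp_plus; f_equal; lra.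
have := exp_le_3; have := exp_pos (1/2) => h1 h2.
have : exp (1/2) < 2 by nra.
have : exp x <= exp (1/2).
  case: (Rle_lt_or_eq_dec _ _ hx) => [h|->]; [apply: Rlt_le; exact: exp_increasing | lra].
lra.
Qed.

Lemma exp_bound x : 0 <= x -> x <= 1/2 -> exp x <= 1 + x + 2/3 * x ^ 2.
Proof.
move=> h0 h1.
have G2 : forall y, 0 <= y -> y <= 1/2 -> 0 <= 1 + 2 * y - exp y.
  apply: (@nonneg_from_deriv (fun y => 1 + 2 * y - exp y) (fun y => 2 - exp y)).
  - move=> y _ _.
    have := derivable_pt_lim_minus _ _ y _ _
      (derivable_pt_lim_plus _ _ y _ _ (derivable_pt_lim_const 1 y)
         (derivable_pt_lim_scal id 2 y _ (derivable_pt_lim_id y)))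
      (derivable_pt_lim_exp y).
    by have -> : 0 + 2 * 1 - exp y = 2 - exp y by ring.
  - move=> y _ hy; have := exp_half_le2 hy; lra.
  - rewrite Rmult_0_r exp_0; lra.
have G1 : forall y, 0 <= y -> y <= 1/2 -> 0 <= 1 + y + y * y - exp y.
  apply: (@nonneg_from_deriv (fun y => 1 + y + y * y - exp y) (fun y => 1 + 2 * y - exp y)).
  - move=> y _ _.
    have := derivable_pt_lim_minus _ _ y _ _
      (derivable_pt_lim_plus _ _ y _ _
         (derivable_pt_lim_plus _ _ y _ _ (derivable_pt_lim_const 1 y) (derivable_pt_lim_id y))
         (derivable_pt_lim_mult _ _ y _ _ (derivable_pt_lim_id y) (derivable_pt_lim_id y)))
      (derivable_pt_lim_exp y).
    by have -> : 0 + 1 + (1 * y + y * 1) - exp y = 1 + 2 * y - exp y by ring.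
  - exact: G2.
  - rewrite exp_0; lra.
have G0 : forall y, 0 <= y -> y <= 1/2 -> 0 <= 1 + y + y * y / 2 + y * y * y / 3 - exp y.
  apply: (@nonneg_from_deriv (fun y => 1 + y + y * y / 2 + y * y * y / 3 - exp y)
     (fun y => 1 + y + y * y - exp y)).
  - move=> y _ _.
    have D2 := derivable_pt_lim_mult _ _ y _ _ (derivable_pt_lim_id y) (derivable_pt_lim_id y).
    have D3 := derivable_pt_lim_mult _ _ y _ _ D2 (derivable_pt_lim_id y).
    have := derivable_pt_lim_minus _ _ y _ _
      (derivable_pt_lim_plus _ _ y _ _
        (derivable_pt_lim_plus _ _ y _ _
          (derivable_pt_lim_plus _ _ y _ _ (derivable_pt_lim_const 1 y) (derivable_pt_lim_id y))
          (derivable_pt_lim_scal _ (/2) y _ D2))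
        (derivable_pt_lim_scal _ (/3) y _ D3))
      (derivable_pt_lim_exp y).
    rewrite /mult_real_fct /plus_fct /minus_fct /mult_fct /id /=.
    have -> : (fun u => 1 + u + / 2 * (u * u) + / 3 * (u * u * u) - exp u) =
              (fun y => 1 + y + y * y / 2 + y * y * y / 3 - exp y).
      by apply: functional_extensionality => u; field.
    by have -> : 0 + 1 + / 2 * (1 * y + y * 1) + / 3 * ((1 * y + y * 1) * y + y * y * 1) - exp y
        = 1 + y + y * y - exp y by field.
  - exact: G1.
  - rewrite exp_0; lra.
have := G0 x h0 h1.
have : x * x * x / 3 <= x * x / 6 by nra.
simpl; lra.
Qed.
Lemma exp_mono x y : x <= y -> exp x <= exp y.
Proof.
move=> h; case: (Rle_lt_or_eq_dec _ _ h) => [h'|->]; last lra.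
by apply: Rlt_le; apply: exp_increasing.
Qed.

Lemma exp_pow x M : exp x ^ M = exp (INR M * x).
Proof.
elim: M => [|M IH]; first by rewrite /= Rmult_0_l exp_0.
rewrite S_INR /= IH -exp_plus; f_equal; ring.
Qed.

Lemma card_sum (T : finType) (P : T -> bool) :
  INR #|[set s | P s]| = \big[Rplus/R0]_(s : T) (if P s then 1 else 0).
Proof.
have -> : \big[Rplus/R0]_(s : T) (if P s then 1 else 0) =
          \big[Rplus/R0]_(s in [set s | P s]) 1.
  by rewrite [RHS]big_mkcond /=; apply: eq_bigr => s _; rewrite inE.
rewrite big_const; elim: #|_| => [|c IH] //.
rewrite iterS -IH S_INR /=; lra.
Qed.

Lemma pb_true (P : Prop) : pb P = true -> P.
Proof. by rewrite /pb; case: excluded_middle_informative. Qed.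

Lemma theta_sq eps h : 0 < eps -> theta eps h ^ 2 = eps / (2 * 2 ^ h).
Proof.
move=> he; rewrite /theta.
have e1 : Rpower 2 (- (INR h + 1) / 2) * Rpower 2 (- (INR h + 1) / 2) = / (2 * 2 ^ h).
  rewrite -Rpower_plus.
  have -> : - (INR h + 1) / 2 + - (INR h + 1) / 2 = - INR h.+1 by rewrite S_INR; field.
  by rewrite Rpower_Ropp Rpower_pow /=; lra.
have e2 := sqrt_sqrt eps (Rlt_le _ _ he).
have -> : (Rpower 2 (- (INR h + 1) / 2) * sqrt eps) ^ 2 =
   (Rpower 2 (- (INR h + 1) / 2) * Rpower 2 (- (INR h + 1) / 2)) * (sqrt eps * sqrt eps) by ring.
rewrite e1 e2; field.
have := pow_lt 2 h ltac:(lra); lra.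
Qed.

Lemma theta_pos eps h : 0 < eps -> 0 < theta eps h.
Proof.
move=> he; rewrite /theta; apply: Rmult_lt_0_compat.
  by rewrite /Rpower; apply: exp_pos.
exact: sqrt_lt_R0.
Qed.
Lemma Rle_div_l' a b c : 0 < c -> a <= b * c -> a / c <= b.
Proof.
move=> hc H; have -> : a / c = (a * / c) by [].
have : b = b * c * / c by field; lra.
move=> ->; apply: Rmult_le_compat_r => //; apply: Rlt_le; exact: Rinv_0_lt_compat.
Qed.
Lemma Rlt_div_l' a b c : 0 < c -> a < b * c -> a / c < b.
Proof.
move=> hc H; have -> : a / c = (a * / c) by [].
have : b = b * c * / c by field; lra.
move=> ->; apply: Rmult_lt_compat_r => //; exact: Rinv_0_lt_compat.
Qed.
Lemma INR_expn (a e : nat) : INR (a ^ e)%N = INR a ^ e.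
Proof.
elim: e => [|e IH]; first by rewrite expn0 /=.
by rewrite expnS mult_INR IH /=.
Qed.
Lemma Rdiv_le_0_compat a c : 0 <= a -> 0 < c -> 0 <= a / c.
Proof. move=> ha hc; apply: Rmult_le_pos => //; apply: Rlt_le; exact: Rinv_0_lt_compat. Qed.
Unset Implicit Arguments.

Theorem mainTheorem5
  (m k n : nat) (hm : (0 < m)%N) (hk : (0 < k)%N) (hn : (0 < n)%N)
  (b : 'I_m -> R) (hb : forall i, 0 < b i)
  (f : 'I_n -> vec k -> xR) (hf : forall t, inG (f t))
  (A : 'I_n -> 'I_m -> 'I_k -> R) (hA : forall t i j, 0 <= A t i j)
  (Pstar : R) (hPstar : is_lub (offline_vals f A b) Pstar) (hPpos : 0 < Pstar)
  (gamma : R) (hgamma : 0 < gamma)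
  (hgA : forall t (x : vec k) r, f t x = Some r -> 0 <= r ->
           forall i, mv (A t) x i / b i <= gamma)
  (hgf : forall t (x : vec k) r, f t x = Some r -> r <= gamma * Pstar)
  (eps : R) (heps : 0 < eps < 1)
  (L : nat) (hL : eps = / 2 ^ L)
  (neps : nat) (hneps : INR n * eps = INR neps)
  (h : nat) (hh : (h < L)%N) :
  prob_perm (fun sigma : {perm 'I_n} =>
     sup_gt (sample_vals f A b eps h (2 ^ h * neps)%N sigma)
            ((1 + 2 * theta eps h) / (1 - theta eps h) * Pstar))
  <= exp (- (eps ^ 2) / (6 * gamma)).
Proof.
have he : 0 < eps by lra.
have th0 := theta_pos h he.
have thsq := theta_sq h he.
set th := theta eps h in th0 thsq *.
have ph : 1 <= 2 ^ h by apply: pow_R1_Rle; lra.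
have pL : 2 ^ h * 2 <= 2 ^ L.
  have -> : 2 ^ h * 2 = 2 ^ h.+1 by rewrite /=; ring.
  by apply: Rle_pow; [lra | apply/leP].
have pLpos : 0 < 2 ^ L by apply: pow_lt; lra.
have epsL : eps * 2 ^ L = 1 by rewrite hL; field; lra.
have th_half : th <= 1/2.
  have : th ^ 2 <= 1/4.
    rewrite thsq.
    have : eps <= 1/2 by nra.
    have p2 : 0 < 2 * 2 ^ h by lra.
    move=> H; apply: Rle_div_l' => //; lra.
  simpl; nra.
set al := 2 ^ h * eps.
have al0 : 0 < al by rewrite /al; nra.
have al1 : al <= 1 by rewrite /al; nra.
have althsq : al * th ^ 2 = eps ^ 2 / 2.
  by rewrite thsq /al; field; lra.
set M := (2 ^ h * neps)%N.
have nR : 0 < INR n by apply: lt_0_INR; apply/ltP.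
have MR : INR M = INR n * al.
  rewrite /M mult_INR INR_expn -hneps /al.
  have -> : INR 2 = 2 by simpl; lra.
  ring.
have Mn : (M <= n)%N.
  by apply/leP; apply: INR_le; rewrite MR; nra.
have [p [p0 Hp]] := dual hb hf hA hPstar hgf.
have f0 : forall t, f t (fun _ => 0) = Some 0 by move=> t; case: (hf t) => _ [_ [_ [_ [_ ->]]]].
have fpos : forall t x, f t x <> None -> forall j, 0 <= x j.
  by move=> t; case: (hf t) => _ [_ [_ [_ [H _]]]].
have dg0 : forall t x r, f t x = Some r -> 0 <= dotp p (fun i => mv (A t) x i).
  move=> t x r H; apply: dotp_ge0 => // i; apply: mv_ge0 => //.
  by apply: (fpos t); rewrite H.
have dz : forall t, dotp p (fun i => mv (A t) (fun _ => 0) i) = 0.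
  by move=> t; rewrite /dotp big1 // => i _; rewrite mv0; ring.
set Gs := fun t y => exists x r, f t x = Some r /\ y = r - dotp p (fun i => mv (A t) x i).
have bG : forall t, bne (Gs t).
  move=> t; apply: (@bne_intro _ 0 (gamma * Pstar)).
    by exists (fun _ => 0), 0; rewrite f0 dz; split => //; ring.
  move=> y [x [r [H ->]]]; have := hgf _ _ _ H; have := dg0 _ _ _ H; lra.
set g := fun t => supR (Gs t).
have hg : forall t x r, f t x = Some r -> r - dotp p (fun i => mv (A t) x i) <= g t.
  by move=> t x r H; apply: supR_ub => //; exists x, r.
have hg0 : forall t, 0 <= g t.
  by move=> t; have := hg t _ _ (f0 t); rewrite dz; lra.
have hgub : forall t, g t <= gamma * Pstar.
  move=> t; apply: supR_le => // y [x [r [H ->]]].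
  have := hgf _ _ _ H; have := dg0 _ _ _ H; lra.
have hG : \big[Rplus/R0]_(t < n) g t + dotp p b <= Pstar.
  suff : \big[Rplus/R0]_(t < n) g t <= Pstar - dotp p b by lra.
  apply: sup_sum => // a Ha.
  have : forall t, exists q : vec k * R, f t q.1 = Some q.2 /\
      a t = q.2 - dotp p (fun i => mv (A t) q.1 i).
    by move=> t; case: (Ha t) => x [r H]; exists (x, r).
  move=> /choiceT [xr Hxr].
  have := Hp (fun t => (xr t).1) (fun t => (xr t).2) (fun t => proj1 (Hxr t)).
  rewrite dotp_sub /sumR dotp_sum.
  have -> : \big[Rplus/R0]_(t < n) a t =
     \big[Rplus/R0]_(t < n) (xr t).2 - \big[Rplus/R0]_(t < n) dotp p (fun i => mv (A t) (xr t).1 i).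
    by rewrite -big_Rsub; apply: eq_bigr => t _; rewrite (proj2 (Hxr t)).
  lra.
have dpb : 0 <= dotp p b by apply: dotp_ge0 => // i; apply: Rlt_le.
set G := \big[Rplus/R0]_(t < n) g t in hG *.
have G0 : 0 <= G by apply: big_Rge0 => t _; auto.
set E := fun sigma : {perm 'I_n} =>
     sup_gt (sample_vals f A b eps h M sigma) ((1 + 2 * th) / (1 - th) * Pstar).
have Ev : forall sigma, E sigma ->
    al * G + al * th * Pstar < \big[Rplus/R0]_(t < n | (t < M)%N) g (sigma t).
  move=> sigma HE; apply: (event_S p0 hg hg0 hG _ _ HE); rewrite -/th -/al; first [split; lra | lra].
set c0 := gamma * Pstar.
have c0p : 0 < c0 by rewrite /c0; nra.
set y := fun t => g t / c0.
have y0 : forall t, 0 <= y t.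
  by move=> t; rewrite /y; apply: Rdiv_le_0_compat => //; auto.
have y1 : forall t, y t <= 1.
  move=> t; rewrite /y; apply: Rle_div_l' => //; have := hgub t; rewrite -/c0; lra.
set z := fun t => exp (th * y t).
have z0 : forall t, 0 <= z t by move=> t; apply: Rlt_le; apply: exp_pos.
set Y := G / c0.
have sumy : \big[Rplus/R0]_(t < n) y t = Y.
  by rewrite /Y /G /y /Rdiv big_distrl.
have Yg : Y * gamma <= 1.
  have : G <= Pstar by lra.
  rewrite /Y /c0 => H.
  have -> : G / (gamma * Pstar) * gamma = G / Pstar by field; lra.
  by apply: Rle_div_l' => //; lra.
have Y0 : 0 <= Y by apply: Rdiv_le_0_compat.
set a := (al * G + al * th * Pstar) / c0.
set kap := th + 2 / 3 * th ^ 2.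
have key : forall sigma : {perm 'I_n},
    (if pb (E sigma) then 1 else 0) <= exp (- (th * a)) * PP z M sigma.
  move=> sigma.
  have PPe : PP z M sigma =
      exp (th * \big[Rplus/R0]_(t < n | (t < M)%N) y (sigma t)).
    by rewrite /PP big_Rscale exp_sum.
  case: ifP => HE; last first.
    by apply: Rmult_le_pos; [apply: Rlt_le; apply: exp_pos | apply: ge0_PP].
  have := Ev _ (pb_true HE).
  have -> : \big[Rplus/R0]_(t < n | (t < M)%N) g (sigma t) =
      c0 * \big[Rplus/R0]_(t < n | (t < M)%N) y (sigma t).
    by rewrite big_Rscale; apply: eq_bigr => t _; rewrite /y; field; lra.
  set T := \big[Rplus/R0]_(t < n | (t < M)%N) y (sigma t) in PPe *.
  move=> HT.
  have Ta : a < T.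
    rewrite /a; apply: Rlt_div_l' => //; lra.
  rewrite PPe -exp_plus.
  have := exp_ineq1_le (- (th * a) + th * T).
  nra.
have cardE : INR #|[set s | pb (E s)]| <= exp (- (th * a)) * FF z M.
  rewrite card_sum /FF big_Rscale; exact: big_Rle.
have Nall : 0 < INR #|{perm 'I_n}|.
  by apply: lt_0_INR; apply/ltP; apply/card_gt0P; exists 1%g.
have FFb := FF_bound z0 hn Mn.
set Zs := \big[Rplus/R0]_(t < n) z t in FFb.
have zb : forall t, z t <= 1 + kap * y t.
  move=> t; rewrite /z /kap.
  have h1 : 0 <= th * y t by apply: Rmult_le_pos; [lra | auto].
  have h2 : th * y t <= 1/2 by have := y1 t; have := y0 t; nra.
  have := exp_bound h1 h2.
  have yy : y t * y t <= y t by have := y1 t; have := y0 t; nra.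
  have e : (th * y t) ^ 2 = th ^ 2 * (y t * y t) by ring.
  have : th ^ 2 * (y t * y t) <= th ^ 2 * y t.
    by apply: Rmult_le_compat_l => //; apply: pow2_ge_0.
  rewrite e; lra.
have Zsb : Zs / INR n <= exp (kap * Y / INR n).
  have : Zs <= INR n + kap * Y.
    have : Zs <= \big[Rplus/R0]_(t < n) (1 + kap * y t).
      by apply: big_Rle => t _; exact: zb.
    rewrite big_split /= big_const_R -big_Rscale sumy; lra.
  move=> H; apply: Rle_trans (exp_ineq1_le _).
  apply: Rle_div_l' => //.
  have -> : (1 + kap * Y / INR n) * INR n = INR n + kap * Y by field; lra.
  done.
have Zs0 : 0 <= Zs / INR n.
  by apply: Rdiv_le_0_compat => //; apply: big_Rge0 => t _; auto.
have powb : (Zs / INR n) ^ M <= exp (al * kap * Y).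
  apply: Rle_trans (pow_incr _ _ M (conj Zs0 Zsb)) _.
  rewrite exp_pow MR; apply: exp_mono; right; field; lra.
rewrite /prob_perm cardsT -/E.
apply: Rle_div_l' => //.
apply: Rle_trans cardE _.
have e1 : exp (- (th * a)) * FF z M <=
    exp (- (th * a)) * ((Zs / INR n) ^ M * INR #|{perm 'I_n}|).
  by apply: Rmult_le_compat_l => //; apply: Rlt_le; apply: exp_pos.
apply: Rle_trans e1 _.
have e2 : exp (- (th * a)) * ((Zs / INR n) ^ M * INR #|{perm 'I_n}|) <=
    exp (- (th * a)) * (exp (al * kap * Y) * INR #|{perm 'I_n}|).
  apply: Rmult_le_compat_l; first by apply: Rlt_le; apply: exp_pos.
  by apply: Rmult_le_compat_r; lra.
apply: Rle_trans e2 _.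
rewrite -Rmult_assoc -exp_plus; apply: Rmult_le_compat_r; first lra.
apply: exp_mono.
have ea : th * a = th * al * Y + al * th ^ 2 / gamma.
  by rewrite /a /Y /c0; field; lra.
rewrite ea /kap.
have e3 : - (eps ^ 2) / (6 * gamma) = - (al * th ^ 2) / (3 * gamma).
  by rewrite althsq; field; lra.
rewrite e3.
have : al * th ^ 2 * (Y * gamma) <= al * th ^ 2.
  have : 0 <= al * th ^ 2 by nra.
  nra.
move=> H.
have -> : - (th * al * Y + al * th ^ 2 / gamma) + al * (th + 2 / 3 * th ^ 2) * Y =
          (2 / 3 * (al * th ^ 2 * (Y * gamma)) - al * th ^ 2) / gamma by field; lra.
apply: Rle_div_l' => //.
have -> : - (al * th ^ 2) / (3 * gamma) * gamma = - (al * th ^ 2) / 3 by field; lra.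
lra.
Qed.
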